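(* Let $(S,\mathcal{S})$ be a measurable space and let $\mathcal{E}\subseteq\mathcal{P}(S)$ be a $\cap$-stable collection with $\sigma(\mathcal{E})=\mathcal{S}$, $\emptyset\in\mathcal{E}$ and $\mathcal{E}\subseteq (\mathcal{E}_{int})_{\sigma}$. If $\pi$ is a constructive cr-set, then \[ T_{\pi}(A)=\sup\{ T_{\pi}(F)\mid F\in\mathcal{E}_{int},\,F\subseteq A\}\quad\text{for all } A\in\mathcal{S}.\]
   Context: $(\Omega,\mathcal{F},P)$ is a probability space; $C(S)$ is the set of countable subsets of $S$; $N_A(M)=|A\cap M|$; $\mathcal{C}(\mathcal{S})=\sigma(N_A\mid A\in\mathcal{S})$; a cr-set is an $\mathcal{F}$-$\mathcal{C}(\mathcal{S})$ measurable map $\pi:\Omega\to C(S)$, finite if its values are finite; a map $\tau:\Omega\to C(S)$ is constructive if $\tau(\omega)=\bigcup_k\pi_k(\omega)$ for all $\omega$ for some finite cr-sets $\pi_k$, $k\in\mathbb{N}$. The hitting function is $T_\pi(A)=P(\pi\cap A\neq\emptyset)$, $A\in\mathcal{S}$. For a nonempty family $\mathcal{E}$: $\mathcal{E}_\sigma$ is the family of countable unions of $\mathcal{E}$-sets (empty union not included); $\mathcal{E}_{int}=\{\bigcap_n (S\setminus E_n)\mid E_n\in\mathcal{E}\}$. *)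

(* Defs.v *)
From Stdlib Require Import Reals List.
Open Scope R_scope.

Definition sigma_algebra {T : Type} (F : (T -> Prop) -> Prop) : Prop :=
  F (fun _ => True) /\
  (forall A, F A -> F (fun x => ~ A x)) /\
  (forall A : nat -> T -> Prop, (forall n, F (A n)) -> F (fun x => exists n, A n x)).

Definition sigma_gen {T : Type} (G : (T -> Prop) -> Prop) : (T -> Prop) -> Prop :=
  fun X => forall Sig : (T -> Prop) -> Prop,
    sigma_algebra Sig -> (forall g, G g -> Sig g) -> Sig X.

Definition probability {Om : Type} (F : (Om -> Prop) -> Prop)
  (P : (Om -> Prop) -> R) : Prop :=
  sigma_algebra F /\
  (forall A, F A -> 0 <= P A) /\
  P (fun _ => True) = 1 /\
  (forall A : nat -> Om -> Prop,
     (forall n, F (A n)) ->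
     (forall m n x, m <> n -> A m x -> A n x -> False) ->
     infinite_sum (fun n => P (A n)) (P (fun x => exists n, A n x))).

Definition countable {S : Type} (M : S -> Prop) : Prop :=
  exists f : S -> nat, forall x y, M x -> M y -> f x = f y -> x = y.

Definition has_card {S : Type} (X : S -> Prop) (n : nat) : Prop :=
  exists l : list S, NoDup l /\ length l = n /\ (forall x, X x <-> In x l).

Definition finite_set {S : Type} (X : S -> Prop) : Prop := exists n, has_card X n.

Definition CS (S : Type) : Type := { M : S -> Prop | countable M }.

(* N_A(M) = |A ∩ M| in N ∪ {∞}, with None standing for ∞ (given as a
   functional relation). *)
Definition NA {S : Type} (A : S -> Prop) (M : CS S) (k : option nat) : Prop :=
  match k with
  | Some n => has_card (fun x => A x /\ proj1_sig M x) n
  | None => ~ finite_set (fun x => A x /\ proj1_sig M x)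
  end.

(* 𝒞(𝒮) = σ(N_A | A ∈ 𝒮), with N ∪ {∞} carrying its discrete sigma-algebra:
   generated by the preimages N_A^{-1}(B), B ⊆ N ∪ {∞}. *)
Definition CSigma {S : Type} (SS : (S -> Prop) -> Prop) : (CS S -> Prop) -> Prop :=
  sigma_gen (fun Y => exists (A : S -> Prop) (B : option nat -> Prop),
                SS A /\ forall M, Y M <-> (exists k, NA A M k /\ B k)).

Definition cr_set {Om S : Type} (F : (Om -> Prop) -> Prop)
  (SS : (S -> Prop) -> Prop) (pi : Om -> CS S) : Prop :=
  forall Y, CSigma SS Y -> F (fun w => Y (pi w)).

Definition finite_cr_set {Om S : Type} (F : (Om -> Prop) -> Prop)
  (SS : (S -> Prop) -> Prop) (pi : Om -> CS S) : Prop :=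
  cr_set F SS pi /\ forall w, finite_set (proj1_sig (pi w)).

Definition constructive {Om S : Type} (F : (Om -> Prop) -> Prop)
  (SS : (S -> Prop) -> Prop) (tau : Om -> CS S) : Prop :=
  exists pik : nat -> Om -> CS S,
    (forall k, finite_cr_set F SS (pik k)) /\
    forall w x, proj1_sig (tau w) x <-> exists k, proj1_sig (pik k w) x.

Definition hitting {Om S : Type} (P : (Om -> Prop) -> R) (pi : Om -> CS S)
  (A : S -> Prop) : R :=
  P (fun w => exists x, proj1_sig (pi w) x /\ A x).

Definition Eint {S : Type} (E : (S -> Prop) -> Prop) : (S -> Prop) -> Prop :=
  fun X => exists En : nat -> S -> Prop,
    (forall n, E (En n)) /\ forall x, X x <-> (forall n, ~ En n x).

(* G_σ: (nonempty) countable unions of G-sets. A nonempty countable family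
   can be enumerated (with repetitions) by nat. *)
Definition sigma_unions {S : Type} (G : (S -> Prop) -> Prop) : (S -> Prop) -> Prop :=
  fun X => exists Gn : nat -> S -> Prop,
    (forall n, G (Gn n)) /\ forall x, X x <-> (exists n, Gn n x).

(* Main.v *)
Require Import Defs.
From Stdlib Require Import Reals Lra Lia List Classical ClassicalEpsilon FunctionalExtensionality PropExtensionality Cantor.
Open Scope R_scope.


Lemma seteq {T : Type} (A B : T -> Prop) : (forall x, A x <-> B x) -> A = B.
Proof. intro H; apply functional_extensionality; intro x; apply propositional_extensionality; auto. Qed.

Section SA.
Lemma sa_compl {T} (Sg : (T -> Prop) -> Prop) A : sigma_algebra Sg -> Sg A -> Sg (fun x => ~ A x).
Proof. intros [_ [H _]] HA; auto. Qed.
Lemma sa_cunion {T} (Sg : (T -> Prop) -> Prop) (A : nat -> T -> Prop) : sigma_algebra Sg -> (forall n, Sg (A n)) -> Sg (fun x => exists n, A n x).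
Proof. intros [_ [_ H]] HA; auto. Qed.
Lemma sa_empty {T} (Sg : (T -> Prop) -> Prop) : sigma_algebra Sg -> Sg (fun _ => False).
Proof. intros H. replace (fun _ : T => False) with (fun x : T => ~ (fun _ => True) x).
 apply sa_compl; auto. apply H. apply seteq; intuition. Qed.
Lemma sa_union2 {T} (Sg : (T -> Prop) -> Prop) A B : sigma_algebra Sg -> Sg A -> Sg B -> Sg (fun x => A x \/ B x).
Proof. intros H HA HB.
 replace (fun x => A x \/ B x) with (fun x => exists n, (fun n => match n with 0%nat => A | _ => B end) n x).
 apply sa_cunion; auto. intros [|n]; auto.
 apply seteq; intro x; split. intros [[|n] Hn]; auto. intros [Ha|Hb]. exists 0%nat; auto. exists 1%nat; auto. Qed.
Lemma sa_inter2 {T} (Sg : (T -> Prop) -> Prop) A B : sigma_algebra Sg -> Sg A -> Sg B -> Sg (fun x => A x /\ B x).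
Proof. intros H HA HB.
 replace (fun x => A x /\ B x) with (fun x => ~ (fun y => (fun z => ~ A z) y \/ (fun z => ~ B z) y) x).
 apply sa_compl; auto; apply sa_union2; auto; apply sa_compl; auto.
 apply seteq; intro x; cbv beta; split. intro H1; apply NNPP; intro H2; apply H1. apply not_and_or; auto.
 intros [Ha Hb] [C|C]; auto. Qed.
Lemma sa_cinter {T} (Sg : (T -> Prop) -> Prop) (A : nat -> T -> Prop) : sigma_algebra Sg -> (forall n, Sg (A n)) -> Sg (fun x => forall n, A n x).
Proof. intros H HA.
 replace (fun x => forall n, A n x) with (fun x => ~ (fun y => exists n, (fun n z => ~ A n z) n y) x).
 apply sa_compl; auto; apply sa_cunion; auto; intro; apply sa_compl; auto.
 apply seteq; intro x; cbv beta; split. intros H1 n; apply NNPP; intro; apply H1; eauto. intros H1 [n Hn]; auto.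
Qed.
End SA.

Lemma P_empty {Om} F (P : (Om -> Prop) -> R) : probability F P -> P (fun _ => False) = 0.
Proof. intros [HF [Hpos [H1 Hadd]]].
 assert (Hs := Hadd (fun _ _ => False) (fun _ => sa_empty F HF) (fun _ _ _ _ a _ => a)).
 assert (E0 : P (fun _ : Om => exists _ : nat, False) = P (fun _ : Om => False)) by (f_equal; apply seteq; firstorder).
 cbv beta in Hs; rewrite E0 in Hs.
 set (x := P (fun _ => False)) in *.
 destruct (Req_dec x 0) as [E|NE]; auto. exfalso.
 assert (Hx : Rabs x / 2 > 0) by (assert (Rabs x > 0) by (apply Rabs_pos_lt; auto); lra).
 destruct (Hs _ Hx) as [N HN].
 assert (A1 := HN N (le_n _)). assert (A2 := HN (S N) (le_S _ _ (le_n _))).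
 simpl in A2. unfold R_dist in *.
 set (s := sum_f_R0 (fun _ => x) N) in *.
 apply Rabs_def2 in A1; apply Rabs_def2 in A2.
 assert (Rabs x = x \/ Rabs x = - x) as [Ea|Ea] by (destruct (Rle_dec 0 x); [left; apply Rabs_right; lra | right; apply Rabs_left; lra]); rewrite Ea in *; lra. Qed.

Lemma P_add2 {Om} F (P : (Om -> Prop) -> R) A B : probability F P -> F A -> F B ->
  (forall x, A x -> B x -> False) -> P (fun x => A x \/ B x) = P A + P B.
Proof. intros HP HA HB Hd. pose proof (P_empty F P HP) as H0. destruct HP as [HF [Hpos [H1 Hadd]]].
 set (s := fun n : nat => match n with 0%nat => A | 1%nat => B | _ => fun _ => False end).
 assert (Hs := Hadd s).
 replace (fun x : Om => exists n, s n x) with (fun x => A x \/ B x) in Hs.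
 2:{ apply seteq; intro x; split. intros [Ha|Hb]. exists 0%nat; auto. exists 1%nat; auto.
     intros [[|[|n]] Hn]; simpl in Hn; tauto. }
 apply (uniqueness_sum (fun n => P (s n))). apply Hs.
 intros [|[|n]]; unfold s; simpl; auto. exact (sa_empty F HF).
 intros [|[|m]] [|[|n]] x Hmn; unfold s; simpl; try tauto; try (intros; eauto); lia.
 intros eps He; exists 1%nat; intros n Hn.
 assert (sum_f_R0 (fun n => P (s n)) n = P A + P B).
 { induction n. lia. destruct n. simpl. reflexivity. rewrite tech5. rewrite IHn by lia. simpl. rewrite H0. ring. }
 rewrite H; unfold R_dist; rewrite Rminus_diag, Rabs_R0; auto. Qed.

Lemma P_mono {Om} F (P : (Om -> Prop) -> R) A B : probability F P -> F A -> F B ->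
  (forall x, A x -> B x) -> P A <= P B.
Proof. intros HP HA HB Hs.
 assert (E: B = (fun x => A x \/ (fun y => B y /\ ~ A y) x)).
 { apply seteq; intro x; split; intro H. destruct (classic (A x)); auto. destruct H as [H|[H _]]; auto. }
 pose proof HP as [HF [Hpos _]].
 rewrite E, P_add2 with (F := F); auto. assert (0 <= P (fun y => B y /\ ~ A y)).
 apply Hpos, sa_inter2, sa_compl; auto. lra. apply sa_inter2; auto; apply sa_compl; auto.
 intros x ? [? ?]; auto. Qed.

Lemma P_sub2 {Om} F (P : (Om -> Prop) -> R) A B C : probability F P -> F A -> F B -> F C ->
  (forall x, C x -> A x \/ B x) -> P C <= P A + P B.
Proof. intros HP HA HB HC Hs. pose proof HP as [HF _].
 assert (E: (fun x => A x \/ B x) = (fun x => A x \/ (fun y => B y /\ ~ A y) x)).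
 { apply seteq; intro x; split; intro H. destruct (classic (A x)); auto. destruct H; [left|right]; tauto. tauto. }
 apply Rle_trans with (P (fun x => A x \/ B x)). apply P_mono with F; auto. apply sa_union2; auto.
 rewrite E, P_add2 with (F := F); auto. apply Rplus_le_compat_l. apply P_mono with F; auto.
 apply sa_inter2; auto; apply sa_compl; auto. tauto. apply sa_inter2; auto; apply sa_compl; auto.
 intros x ? [? ?]; auto. Qed.

Lemma incr_le {T} (C : nat -> T -> Prop) : (forall n x, C n x -> C (S n) x) ->
  forall m n x, (m <= n)%nat -> C m x -> C n x.
Proof. intros H m n x Hle; induction Hle; auto. Qed.

Lemma P_cont_below {Om} F (P : (Om -> Prop) -> R) (C : nat -> Om -> Prop) : probability F P ->
  (forall n, F (C n)) -> (forall n x, C n x -> C (S n) x) ->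
  Un_cv (fun n => P (C n)) (P (fun x => exists n, C n x)).
Proof. intros HP HC Hinc. pose proof HP as [HF [Hpos [H1 Hadd]]].
 set (D := fun n => match n with 0%nat => C 0%nat | S m => fun x => C (S m) x /\ ~ C m x end).
 assert (HD : forall n, F (D n)). { intros [|n]; unfold D; simpl; auto. apply sa_inter2; auto. apply sa_compl; auto. }
 assert (Hdis : forall m n x, m <> n -> D m x -> D n x -> False).
 { assert (K : forall m n x, (m < n)%nat -> D m x -> D n x -> False).
   { intros m n x Hmn Hm Hn. destruct n as [|n]. lia. unfold D in Hn; simpl in Hn. destruct Hn as [_ Hn].
     apply Hn. apply incr_le with m; auto. lia. destruct m; unfold D in Hm; simpl in Hm; tauto. }
   intros m n x Hmn Hm Hn. destruct (Nat.lt_gt_cases m n) as [[L|L] _]; auto; eauto. }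
 assert (Hu : (fun x => exists n, D n x) = (fun x => exists n, C n x)).
 { apply seteq; intro x; split.
   - intros [n Hn]; exists n; destruct n; unfold D in Hn; simpl in Hn; tauto.
   - intros [n Hn]; induction n. exists 0%nat; auto.
     destruct (classic (C n x)); auto. exists (S n); unfold D; simpl; auto. }
 assert (Hps : forall N, sum_f_R0 (fun n => P (D n)) N = P (C N)).
 { induction N. reflexivity. cbn [sum_f_R0]. rewrite IHN.
   replace (C (S N)) with (fun x => C N x \/ D (S N) x).
   rewrite (P_add2 F P); auto. unfold D; simpl; tauto.
   apply seteq; intro x; unfold D; simpl; split. intros [H|[H _]]; auto.
   intro H; destruct (classic (C N x)); auto. }
 assert (Hs := Hadd D HD Hdis). rewrite Hu in Hs.
 intros eps He; destruct (Hs eps He) as [N HN]; exists N; intros n Hn.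
 rewrite <- Hps; auto. Qed.

Lemma P_le_union {Om} F (P : (Om -> Prop) -> R) (C : nat -> Om -> Prop) : probability F P ->
  (forall n, F (C n)) -> forall n, P (C n) <= P (fun x => exists n, C n x).
Proof. intros HP HC n. pose proof HP as [HF _]. apply P_mono with F; eauto. apply sa_cunion; auto. Qed.

Lemma P_cont_above {Om} F (P : (Om -> Prop) -> R) (B : nat -> Om -> Prop) : probability F P ->
  (forall n, F (B n)) -> (forall n x, B (S n) x -> B n x) -> (forall x, exists n, ~ B n x) ->
  forall eps, eps > 0 -> exists N, P (B N) < eps.
Proof. intros HP HB Hdec Hex eps He. pose proof HP as [HF [Hpos [H1 Hadd]]].
 assert (Hc := P_cont_below F P (fun n x => ~ B n x) HP (fun n => sa_compl F _ HF (HB n))).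
 cbv beta in Hc. replace (fun x => exists n, ~ B n x) with (fun _ : Om => True) in Hc by (apply seteq; intro x; split; auto).
 destruct (Hc (fun n x Hn H => Hn (Hdec n x H)) eps He) as [N HN]. exists N.
 specialize (HN N (le_n _)). unfold R_dist in HN. apply Rabs_def2 in HN. rewrite H1 in HN.
 assert (E : P (fun x => B N x \/ ~ B N x) = P (B N) + P (fun x => ~ B N x)).
 apply P_add2 with F; auto. apply sa_compl; auto.
 replace (fun x => B N x \/ ~ B N x) with (fun _ : Om => True) in E by (apply seteq; intro x; split; auto; intros; apply classic).
 lra. Qed.

Fixpoint PU {T} (K : nat -> T -> Prop) (N : nat) : T -> Prop :=
  match N with 0%nat => K 0%nat | S N => fun x => PU K N x \/ K (S N) x end.

Lemma PU_intro {T} (K : nat -> T -> Prop) N n x : (n <= N)%nat -> K n x -> PU K N x.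
Proof. induction N; intros Hle Hk; simpl. replace n with 0%nat in Hk by lia; auto.
 destruct (Nat.eq_dec n (S N)). subst; auto. left; apply IHN; auto; lia. Qed.

Lemma PU_elim {T} (K : nat -> T -> Prop) N x : PU K N x -> exists n, (n <= N)%nat /\ K n x.
Proof. induction N; simpl. exists 0%nat; auto. intros [H|H]. destruct (IHN H) as [n [? ?]]; exists n; split; auto.
 exists (S N); auto. Qed.

Lemma PU_mono {T} (K : nat -> T -> Prop) N x : PU K N x -> PU K (S N) x.
Proof. simpl; auto. Qed.

Lemma PU_closed {T} (Q : (T -> Prop) -> Prop) (K : nat -> T -> Prop) :
  (forall A B, Q A -> Q B -> Q (fun x => A x \/ B x)) -> (forall n, Q (K n)) -> forall N, Q (PU K N).
Proof. intros Hu HK N; induction N; simpl; auto. Qed.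

Lemma P_csub {Om} F (P : (Om -> Prop) -> R) (C : nat -> Om -> Prop) eps : probability F P ->
  (forall n, F (C n)) -> (forall n, P (C n) <= eps / 2 ^ (S n)) -> P (fun x => exists n, C n x) <= eps.
Proof. intros HP HC Hb. pose proof HP as [HF [Hpos _]].
 assert (HU : forall N, F (PU C N)) by (apply PU_closed; auto; intros; apply sa_union2; auto).
 assert (Hb2 : forall N, P (PU C N) <= eps - eps / 2 ^ (S N)).
 { induction N. specialize (Hb 0%nat). cbn [PU] in *. rewrite pow_1 in *. lra.
   apply Rle_trans with (P (PU C N) + P (C (S N))). apply P_sub2 with F; auto. simpl; auto.
   specialize (Hb (S N)). assert (Hq : 2 ^ S N > 0) by (apply pow_lt; lra).
   change (2 ^ S N) with (2 * 2 ^ N) in *. change (2 ^ S (S N)) with (2 * (2 * 2 ^ N)) in *.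
   replace (eps / (2 * (2 * 2 ^ N))) with (eps / (2 * 2 ^ N) / 2) in * by (field; lra).
   lra. }
 assert (Hcv := P_cont_below F P (PU C) HP HU (fun N x H => PU_mono C N x H)).
 replace (fun x => exists n, PU C n x) with (fun x => exists n, C n x) in Hcv.
 2:{ apply seteq; intro x; split. intros [n Hn]; exists n; apply PU_intro with n; auto.
     intros [n Hn]; destruct (PU_elim C n x Hn) as [m [_ Hm]]; eauto. }
 apply Rnot_lt_le; intro Hlt.
 destruct (Hcv (P (fun x => exists n, C n x) - eps)) as [N HN]. lra.
 specialize (HN N (le_n _)); unfold R_dist in HN; apply Rabs_def2 in HN.
 specialize (Hb2 N). assert (0 <= eps / 2 ^ S N).
 { assert (0 <= eps). { specialize (Hb 0%nat). specialize (Hpos _ (HC 0%nat)). rewrite pow_1 in Hb. lra. }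
   apply Rmult_le_pos; auto. apply Rlt_le, Rinv_0_lt_compat, pow_lt; lra. }
 lra. Qed.

Lemma Eint_union2 {U} (E : (U -> Prop) -> Prop) :
  (forall A B, E A -> E B -> E (fun x => A x /\ B x)) ->
  forall G1 G2, Eint E G1 -> Eint E G2 -> Eint E (fun x => G1 x \/ G2 x).
Proof. intros Hcap G1 G2 [E1 [HE1 H1]] [E2 [HE2 H2]].
 exists (fun k => fun x => E1 (fst (of_nat k)) x /\ E2 (snd (of_nat k)) x). split.
 intro k; apply Hcap; auto.
 intro x; split.
 - intros [Hg|Hg] k [Ha Hb]. eapply H1; eauto. eapply H2; eauto.
 - intro H. destruct (classic (G2 x)) as [Hg|Hg]; auto. left. apply H1. intros n Hn.
   assert (Hm : exists m, E2 m x). { apply NNPP; intro Hc; apply Hg, H2; intros m Hm; apply Hc; eauto. }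
   destruct Hm as [m Hm]. apply (H (to_nat (n, m))). rewrite cancel_of_to; simpl; auto. Qed.

Lemma Eint_cinter {U} (E : (U -> Prop) -> Prop) (G : nat -> U -> Prop) :
  (forall n, Eint E (G n)) -> Eint E (fun x => forall n, G n x).
Proof. intros HG. apply choice in HG. destruct HG as [f Hf].
 exists (fun k => f (fst (of_nat k)) (snd (of_nat k))). split.
 intro k; apply Hf. intro x; split.
 - intros H k. apply (proj2 (Hf (fst (of_nat k)))). auto.
 - intros H n. apply (proj2 (Hf n)). intros m. specialize (H (to_nat (n, m))). rewrite cancel_of_to in H; auto. Qed.

Lemma Eint_True {U} (E : (U -> Prop) -> Prop) : E (fun _ => False) -> Eint E (fun _ => True).
Proof. intros H. exists (fun _ _ => False); split; auto. intro x; split; auto. Qed.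

Lemma Eint_compl {U} (E : (U -> Prop) -> Prop) X : E X -> Eint E (fun x => ~ X x).
Proof. intros H. exists (fun _ => X); split; auto. intro x; split; auto. intro H1; apply (H1 0%nat). Qed.

Definition Hit {Om U : Type} (rho : Om -> U -> Prop) (B : U -> Prop) : Om -> Prop :=
  fun w => exists x, rho w x /\ B x.

Definition approx {Om U : Type} (P : (Om -> Prop) -> R) (E : (U -> Prop) -> Prop)
  (rho : Om -> U -> Prop) (A : U -> Prop) : Prop :=
  forall eps, eps > 0 -> exists G, Eint E G /\ (forall x, G x -> A x) /\
    P (Hit rho (fun x => A x /\ ~ G x)) < eps.

Lemma dec_le {T} (B : nat -> T -> Prop) : (forall n x, B (S n) x -> B n x) ->
  forall m n x, (m <= n)%nat -> B n x -> B m x.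
Proof. intros H m n x Hle; induction Hle; auto. Qed.

Lemma fin_point {U} (B : nat -> U -> Prop) (l : list U) : (forall n x, B (S n) x -> B n x) ->
  (forall x, exists n, ~ B n x) -> exists N, forall x, In x l -> ~ B N x.
Proof. intros Hd Hx. induction l as [|a l IH]. exists 0%nat; intros x [].
 destruct IH as [N1 H1]. destruct (Hx a) as [na Ha]. exists (Nat.max N1 na).
 intros x [<-|Hin] Hb. apply Ha. apply dec_le with (Nat.max N1 na); auto; lia.
 apply (H1 x Hin). apply dec_le with (Nat.max N1 na); auto; lia. Qed.

Lemma core (Om : Type) (F : (Om -> Prop) -> Prop) (P : (Om -> Prop) -> R)
  (U : Type) (SS : (U -> Prop) -> Prop) (E : (U -> Prop) -> Prop) (rho : Om -> U -> Prop) :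
  probability F P ->
  sigma_algebra SS ->
  (forall A B, E A -> E B -> E (fun x => A x /\ B x)) ->
  (forall X, sigma_gen E X <-> SS X) ->
  E (fun _ => False) ->
  (forall X, E X -> sigma_unions (Eint E) X) ->
  (forall B, SS B -> F (Hit rho B)) ->
  (forall w, exists l, forall x, rho w x -> In x l) ->
  forall A, SS A -> approx P E rho A.
Proof.
 intros HP HSS Hcap Hgen HE0 HEu Hm Hf.
 pose proof HP as [HF [Hpos _]].
 assert (ESS : forall g, E g -> SS g). { intros g Hg; apply (proj1 (Hgen g)); unfold sigma_gen; intros Sig _ H; auto. }
 assert (EintSS : forall G, Eint E G -> SS G).
 { intros G [En [HEn HG]]. replace G with (fun x => ~ (fun y => exists n, En n y) x).
   apply sa_compl; auto; apply sa_cunion; auto.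
   apply seteq; intro x; rewrite HG; split. intros H n Hn; apply H; eauto. intros H [n Hn]; eapply H; eauto. }
 assert (EU : forall A B, Eint E A -> Eint E B -> Eint E (fun x => A x \/ B x)) by (apply Eint_union2; auto).
 assert (Hfc : forall B : nat -> U -> Prop, (forall n, SS (B n)) -> (forall n x, B (S n) x -> B n x) ->
            (forall x, exists n, ~ B n x) -> forall eps, eps > 0 -> exists N, P (Hit rho (B N)) < eps).
 { intros B HB Hd Hx. apply P_cont_above with F; auto.
   - intros n w [x [Hx1 Hb]]; exists x; eauto.
   - intro w. destruct (Hf w) as [l Hl]. destruct (fin_point B l Hd Hx) as [N HN]. exists N.
     intros [x [Hx1 Hb]]. eapply HN; eauto. }
 set (D := fun A => SS A /\ approx P E rho A /\ approx P E rho (fun x => ~ A x)).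
 assert (Hzero : forall B, (forall x, ~ B x) -> P (Hit rho B) = 0).
 { intros B HB. rewrite <- (P_empty F P HP). f_equal. apply seteq. intro w; split.
   intros [x [_ Hb]]; exact (HB x Hb). tauto. }
 assert (HED : forall X, E X -> D X).
 { intros X HX. split; [auto| split].
   - intros eps He. destruct (HEu X HX) as [K [HK HKX]].
     destruct (Hfc (fun N x => X x /\ ~ PU K N x)) with eps as [N HN]; auto.
     + intro n. apply sa_inter2; auto. apply sa_compl; auto. apply PU_closed; auto.
       intros; apply sa_union2; auto.
     + intros n x [H1 H2]; split; auto. intro; apply H2; apply PU_mono; auto.
     + intro x. destruct (classic (X x)) as [Hx|Hx].
       destruct (proj1 (HKX x) Hx) as [n Hn]. exists n. intros [_ H]; apply H; apply PU_intro with n; auto.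
       exists 0%nat; tauto.
     + exists (PU K N). split. apply PU_closed; auto. split; auto.
       intros x Hx; destruct (PU_elim K N x Hx) as [n [_ Hn]]; apply HKX; eauto.
   - intros eps He. exists (fun x => ~ X x). split. apply Eint_compl; auto. split; auto.
     rewrite Hzero; auto. tauto. }
 assert (HDc : forall A, D A -> D (fun x => ~ A x)).
 { intros A [H1 [H2 H3]]. split. apply sa_compl; auto. split; auto.
   replace (fun x => ~ (fun y => ~ A y) x) with A; auto. apply seteq; intro; split; auto. apply NNPP. }
 assert (Hpos2 : forall eps n, eps > 0 -> eps / 2 / 2 ^ (S n) > 0).
 { intros eps n He. unfold Rdiv; repeat apply Rmult_lt_0_compat; try apply Rinv_0_lt_compat; try apply pow_lt; lra. }
 assert (HDu : forall A : nat -> U -> Prop, (forall n, D (A n)) -> D (fun x => exists n, A n x)).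
 { intros A HA. split. apply sa_cunion; auto; intro n; apply HA. split.
   - intros eps He.
     assert (Hch : forall n, exists G, Eint E G /\ (forall x, G x -> A n x) /\
                     P (Hit rho (fun x => A n x /\ ~ G x)) < eps / 2 / 2 ^ (S n)).
     { intro n. apply (proj1 (proj2 (HA n))). auto. }
     apply choice in Hch. destruct Hch as [Gf HG].
     assert (Hs : P (fun w => exists n, Hit rho (fun x => A n x /\ ~ Gf n x) w) <= eps / 2).
     { apply P_csub with F; auto. intro n; apply Hm. apply sa_inter2; auto. apply HA.
       apply sa_compl; auto; apply EintSS; apply HG. intro n; left; apply HG. }
     destruct (Hfc (fun N x => (exists n, A n x) /\ ~ PU A N x)) with (eps / 2) as [N HN]; [| | |lra|].
     + intro n; apply sa_inter2; auto. apply sa_cunion; auto; intro; apply HA.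
       apply sa_compl; auto. apply PU_closed; [intros; apply sa_union2; auto| intro; apply HA].
     + intros n x [H1 H2]; split; auto; intro; apply H2; apply PU_mono; auto.
     + intro x. destruct (classic (exists n, A n x)) as [[n Hn]|Hx].
       exists n; intros [_ H]; apply H; apply PU_intro with n; auto. exists 0%nat; tauto.
     + exists (PU Gf N). split. apply PU_closed; [intros; apply EU; auto | intro; apply HG]. split.
       intros x Hx; destruct (PU_elim _ _ _ Hx) as [n [_ Hn]]; exists n; apply HG; auto.
       apply Rle_lt_trans with (P (Hit rho (fun x => (exists n, A n x) /\ ~ PU A N x)) +
          P (fun w => exists n, Hit rho (fun x => A n x /\ ~ Gf n x) w)); [|lra].
       assert (SSA : SS (fun x => exists n, A n x)) by (apply sa_cunion; auto; intro; apply HA).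
       apply P_sub2 with F; auto.
       * apply Hm. apply sa_inter2; auto. apply sa_compl; auto.
         apply PU_closed; [intros; apply sa_union2; auto| intro; apply HA].
       * apply sa_cunion; auto; intro n; apply Hm. apply sa_inter2; auto. apply HA.
         apply sa_compl; auto; apply EintSS; apply HG.
       * apply Hm. apply sa_inter2; auto. apply sa_compl; auto. apply EintSS.
         apply PU_closed; [intros; apply EU; auto | intro; apply HG].
       * intros w [x [Hx [Hu HnG]]]. destruct (classic (PU A N x)) as [Hp|Hp].
         right. destruct (PU_elim _ _ _ Hp) as [n [Hle Hn]]. exists n, x. split; auto. split; auto.
         intro Hg; apply HnG; apply PU_intro with n; auto.
         left. exists x; auto.
   - intros eps He.
     assert (Hch : forall n, exists G, Eint E G /\ (forall x, G x -> ~ A n x) /\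
                     P (Hit rho (fun x => ~ A n x /\ ~ G x)) < eps / 2 / 2 ^ (S n)).
     { intro n. apply (proj2 (proj2 (HA n))). auto. }
     apply choice in Hch. destruct Hch as [Gf HG].
     assert (Hs : P (fun w => exists n, Hit rho (fun x => ~ A n x /\ ~ Gf n x) w) <= eps / 2).
     { apply P_csub with F; auto. intro n; apply Hm. apply sa_inter2; auto. apply sa_compl; auto; apply HA.
       apply sa_compl; auto; apply EintSS; apply HG. intro n; left; apply HG. }
     exists (fun x => forall n, Gf n x). split. apply Eint_cinter; intro; apply HG. split.
     intros x Hx [n Hn]. exact (proj1 (proj2 (HG n)) x (Hx n) Hn).
     apply Rle_lt_trans with (P (fun w => exists n, Hit rho (fun x => ~ A n x /\ ~ Gf n x) w)); [|lra].
     apply P_mono with F; auto.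
     * apply Hm. apply sa_inter2; auto. apply sa_compl; auto; apply sa_cunion; auto; intro; apply HA.
       apply sa_compl; auto; apply EintSS, Eint_cinter; intro; apply HG.
     * apply sa_cunion; auto; intro n; apply Hm. apply sa_inter2; auto. apply sa_compl; auto; apply HA.
       apply sa_compl; auto; apply EintSS; apply HG.
     * intros w [x [Hx [Hna Hng]]]. apply not_all_ex_not in Hng. destruct Hng as [n Hn].
       exists n, x. split; auto. split; auto. intro; apply Hna; exists n; auto. }
 assert (HDsa : sigma_algebra D).
 { split; [|split; auto].
   replace (fun _ : U => True) with (fun x => ~ (fun _ : U => False) x) by (apply seteq; intuition).
   apply HDc, HED, HE0. }
 intros A HA. apply Hgen in HA. apply (HA D HDsa HED).
Qed.

Lemma hit_meas_cr {Om U : Type} (F : (Om -> Prop) -> Prop) (SS : (U -> Prop) -> Prop) (tau : Om -> CS U) B :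
  cr_set F SS tau -> SS B -> F (Hit (fun w => proj1_sig (tau w)) B).
Proof. intros H HB. unfold cr_set in H.
 apply (H (fun M => exists x, proj1_sig M x /\ B x)).
 unfold CSigma, sigma_gen; intros Sig HSig Hg; apply Hg.
 exists B, (fun k => k <> Some 0%nat). split; auto. intro M; split.
 - intros [x [Hx Hb]]. destruct (classic (finite_set (fun y => B y /\ proj1_sig M y))) as [[n Hn]|Hn].
   + exists (Some n). split; auto. intro Heq; inversion Heq; subst.
     destruct Hn as [l [_ [Hlen Hin]]]. destruct l; [|discriminate]. apply (proj1 (Hin x)); auto.
   + exists None; split; auto. discriminate.
 - intros [[n|] [Hk Hne]]; simpl in Hk.
   + destruct Hk as [l [_ [Hlen Hin]]]. destruct l as [|a l]. simpl in Hlen; subst; congruence.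
     exists a. destruct (proj2 (Hin a) (or_introl eq_refl)); auto.
   + apply NNPP; intro Hno; apply Hk. exists 0%nat, nil. split. constructor. split; auto.
     intro x; split; [intros [Hb Hx]; exfalso; apply Hno; eauto | intros []]. Qed.

Theorem theorem5p7 (Om : Type) (F : (Om -> Prop) -> Prop) (P : (Om -> Prop) -> R)
  (S : Type) (SS : (S -> Prop) -> Prop) (E : (S -> Prop) -> Prop)
  (pi : Om -> CS S) :
  probability F P ->
  sigma_algebra SS ->
  (forall A B, E A -> E B -> E (fun x => A x /\ B x)) ->
  (forall X, sigma_gen E X <-> SS X) ->
  E (fun _ => False) ->
  (forall X, E X -> sigma_unions (Eint E) X) ->
  cr_set F SS pi ->
  constructive F SS pi ->
  forall A, SS A ->
    is_lub (fun t => exists G, Eint E G /\ (forall x, G x -> A x) /\ t = hitting P pi G)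
           (hitting P pi A).
Proof.
 intros HP HSS Hcap Hgen HE0 HEu Hcr Hcon A HA.
 destruct Hcon as [pik [Hpik Hun]].
 pose proof HP as [HF [Hpos _]].
 assert (ESS : forall g, E g -> SS g). { intros g Hg; apply (proj1 (Hgen g)); unfold sigma_gen; intros Sig _ H; auto. }
 assert (EintSS : forall G, Eint E G -> SS G).
 { intros G [En [HEn HG]]. replace G with (fun x => ~ (fun y => exists n, En n y) x).
   apply sa_compl; auto; apply sa_cunion; auto.
   apply seteq; intro x; rewrite HG; split. intros H n Hn; apply H; eauto. intros H [n Hn]; eapply H; eauto. }
 set (rho := fun (n : nat) (w : Om) (x : S) => exists k, (k <= n)%nat /\ proj1_sig (pik k w) x).
 assert (Hm : forall n B, SS B -> F (Hit (rho n) B)).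
 { intros n B HB.
   replace (Hit (rho n) B) with (fun w => exists k, (fun k w => (k <= n)%nat /\ Hit (fun w => proj1_sig (pik k w)) B w) k w).
   2:{ apply seteq; intro w; unfold Hit, rho; split.
       intros [k [Hk [x [Hx Hb]]]]; exists x; split; eauto.
       intros [x [[k [Hk Hx]] Hb]]; exists k; split; auto; exists x; auto. }
   apply sa_cunion; auto; intro k. destruct (Compare_dec.le_lt_dec k n) as [Hk|Hk].
   - replace (fun w => (k <= n)%nat /\ Hit (fun w => proj1_sig (pik k w)) B w) with (Hit (fun w => proj1_sig (pik k w)) B).
     apply hit_meas_cr with SS; auto. apply Hpik. apply seteq; intro w; tauto.
   - replace (fun w => (k <= n)%nat /\ Hit (fun w => proj1_sig (pik k w)) B w) with (fun _ : Om => False).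
     apply sa_empty; auto. apply seteq; intro w; split; [tauto| intros [H _]; lia]. }
 assert (Hf : forall n w, exists l, forall x, (exists k, (k <= n)%nat /\ proj1_sig (pik k w) x) -> In x l).
 { intros n w. induction n.
   - destruct (proj2 (Hpik 0%nat) w) as [m [l [_ [_ Hin]]]]. exists l.
     intros x [k [Hk Hx]]. replace k with 0%nat in Hx by lia. apply Hin; auto.
   - destruct IHn as [l1 H1]. destruct (proj2 (Hpik (Datatypes.S n)) w) as [m [l2 [_ [_ Hin]]]].
     exists (l1 ++ l2). intros x [k [Hk Hx]]. apply in_or_app.
     destruct (Nat.eq_dec k (Datatypes.S n)). subst; right; apply Hin; auto. left; apply H1; exists k; split; [lia|exact Hx]. }
 assert (Hpm : forall B, SS B -> F (Hit (fun w => proj1_sig (pi w)) B)) by (intros; apply hit_meas_cr with SS; auto).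
 split.
 - intros t [G [HG [Hsub ->]]]. unfold hitting.
   apply (P_mono F P (Hit (fun w => proj1_sig (pi w)) G) (Hit (fun w => proj1_sig (pi w)) A)); auto.
   intros w [x [Hx Hg]]; exists x; auto.
 - intros b Hb. apply Rnot_lt_le; intro Hlt.
   set (eps := hitting P pi A - b).
   assert (He : eps > 0) by (unfold eps; lra).
   assert (Hc := P_cont_below F P (fun n => Hit (rho n) A) HP (fun n => Hm n A HA)).
   cbv beta in Hc. replace (fun x => exists n, Hit (rho n) A x) with (Hit (fun w => proj1_sig (pi w)) A) in Hc.
   2:{ apply seteq; intro w; unfold Hit, rho; split.
       - intros [x [Hx Ha]]. destruct (proj1 (Hun w x) Hx) as [k Hk]. exists k, x. split; auto. exists k; auto.
       - intros [n [x [[k [_ Hk]] Ha]]]. exists x; split; auto. apply Hun; eauto. }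
   destruct (Hc (fun n w H => match H with ex_intro _ x (conj (ex_intro _ k (conj Hk Hx)) Ha) =>
       ex_intro _ x (conj (ex_intro _ k (conj (le_S _ _ Hk) Hx)) Ha) end) (eps / 2)) as [N HN]. lra.
   specialize (HN N (le_n _)). unfold R_dist in HN. apply Rabs_def2 in HN.
   destruct (core Om F P S SS E (rho N) HP HSS Hcap Hgen HE0 HEu (Hm N) (Hf N) A HA (eps / 2)) as [G [HG [Hsub HG2]]]. lra.
   assert (HGS : SS G) by auto.
   assert (H1 : P (Hit (rho N) A) <= P (Hit (rho N) G) + P (Hit (rho N) (fun x => A x /\ ~ G x))).
   { apply P_sub2 with F; auto. apply Hm; apply sa_inter2; auto; apply sa_compl; auto.
     intros w [x [Hx Ha]]. destruct (classic (G x)); [left|right]; exists x; auto. }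
   assert (H2 : P (Hit (rho N) G) <= hitting P pi G).
   { unfold hitting. apply (P_mono F P (Hit (rho N) G) (Hit (fun w => proj1_sig (pi w)) G)); auto.
     intros w [x [[k [_ Hx]] Hg]]. exists x; split; auto. apply Hun; eauto. }
   assert (H3 : hitting P pi G <= b) by (apply Hb; exists G; auto).
   assert (Eh : hitting P pi A = P (Hit (fun w => proj1_sig (pi w)) A)) by reflexivity.
   unfold eps in *. lra.
Qed.
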